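(* Let $H$ be an uncoloured graph and let $S\subseteq E(H)$. Then there exists a half-edge $2$-colouring $d$ of $H$ such that $(H,d)$ is a W-cone and every edge of $S$ is bichromatic if and only if $H$ is matching-covered and contains a universal vertex $v$ that is incident with a pair of parallel edges and with every edge of $S$.
   Context: Graphs may have parallel edges but no loops. A vertex is universal if it is adjacent to all other vertices. A half-edge $2$-colouring $d$ of $H$ assigns to each pair $(e,w)$ with $w$ an endpoint of edge $e$ a colour in $\{0,1\}$ (0 = blue, 1 = red). An edge $e=uv$ is bichromatic if $d(e,u)\neq d(e,v)$ and monochromatic otherwise; $E_b(H)$, $E_m(H)$ denote the bichromatic and monochromatic edge sets; standing convention: monochromatic edges are blue at both ends. A graph is matching-covered if every edge lies in some perfect matching. A W-cone is a half-edge $2$-coloured matching-covered graph $(H,d)$ containing a universal vertex $v$ (the apex) such that the set of edges incident with $v$ equals $E_b(H)$, $E(H-v)=E_m(H)$, and every vertex $u$ is incident with an edge $e$ with $d(e,u)=1$. *)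

(* Defs.v *)
(* A loopless multigraph H is given by a finite vertex type V,
   a finite edge type E and endpoint maps s t : E -> V with s e != t e. *)
From mathcomp Require Import all_boot.
Set Implicit Arguments. Unset Strict Implicit. Unset Printing Implicit Defensive.

Section Multigraph.
Variables (V E : finType) (s t : E -> V).

Definition incident (e : E) (w : V) : bool := (s e == w) || (t e == w).

Definition adjacent (u v : V) : bool :=
  [exists e : E, ((s e == u) && (t e == v)) || ((s e == v) && (t e == u))].

Definition universal (v : V) : Prop := forall u : V, u != v -> adjacent u v.

Definition parallel (e1 e2 : E) : bool :=
  (e1 != e2) &&
  (((s e1 == s e2) && (t e1 == t e2)) || ((s e1 == t e2) && (t e1 == s e2))).

Definition perfect_matching (M : {set E}) : Prop :=
  forall w : V, #|[set e in M | incident e w]| = 1.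

Definition matching_covered : Prop :=
  forall e : E, exists M : {set E}, perfect_matching M /\ e \in M.

(* Half-edge 2-colourings: d e w is the colour (false = blue, true = red) of
   the half-edge (e, w); only its values at endpoints w of e are meaningful. *)
Definition bichromatic (d : E -> V -> bool) (e : E) : bool := d e (s e) != d e (t e).
Definition monochromatic (d : E -> V -> bool) (e : E) : bool := d e (s e) == d e (t e).

(* standing convention: monochromatic edges are blue at both ends *)
Definition mono_blue (d : E -> V -> bool) : Prop :=
  forall e : E, monochromatic d e -> d e (s e) = false /\ d e (t e) = false.

Definition W_cone (d : E -> V -> bool) : Prop :=
  matching_covered /\
  exists v : V,
    universal v /\
    (forall e : E, incident e v <-> bichromatic d e) /\
    (forall e : E, ~~ incident e v <-> monochromatic d e) /\
    (forall u : V, exists e : E, incident e u /\ d e u = true).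

End Multigraph.

(* Main.v *)
Require Import Defs.
From mathcomp Require Import all_boot.

Lemma ends2 (V E : finType) (s t : E -> V)
    (noloop : forall e : E, s e != t e) e e' u v :
  u != v -> incident s t e u -> incident s t e v ->
  incident s t e' u -> incident s t e' v ->
  ((s e == s e') && (t e == t e')) || ((s e == t e') && (t e == s e')).
Proof.
rewrite /incident => nuv.
have nl := noloop e; have nl' := noloop e'.
move/eqP: nuv nl nl' => nuv /eqP nl /eqP nl'.
move=> /orP[/eqP e1|/eqP e1] /orP[/eqP e2|/eqP e2] /orP[/eqP e3|/eqP e3]
  /orP[/eqP e4|/eqP e4];
  rewrite ?e1 ?e2 ?e3 ?e4 ?eqxx ?orbT //; exfalso; congruence.
Qed.

Lemma par_inc (V E : finType) (s t : E -> V) e1 e2 w :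
  parallel s t e1 e2 -> incident s t e1 w -> incident s t e2 w.
Proof.
rewrite /parallel /incident => /andP[_ /orP[/andP[/eqP a /eqP b]|/andP[/eqP a /eqP b]]];
  rewrite a b //; by rewrite orbC.
Qed.

Theorem mainTheorem16 (V E : finType) (s t : E -> V)
    (noloop : forall e : E, s e != t e) (S : {set E}) :
  (exists d : E -> V -> bool,
      mono_blue s t d /\ W_cone s t d /\
      (forall e : E, e \in S -> bichromatic s t d e))
  <->
  (matching_covered s t /\
   exists v : V,
     universal s t v /\
     (exists e1 e2 : E, parallel s t e1 e2 /\ incident s t e1 v) /\
     (forall e : E, e \in S -> incident s t e v)).
Proof.
split.
- move=> [d [mb [[mc [v [uv [hb [hm hr]]]]] hS]]].
  split => //; exists v; split => //; split; last first.
    by move=> e /hS /hb.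
  have [e [ie de]] := hr v.
  have be : bichromatic s t d e by apply/hb.
  have [u [nuv iu du]] : exists u, [/\ u != v, incident s t e u & d e u = false].
    move: be; rewrite /bichromatic => be.
    case/orP: ie => /eqP hs.
    - exists (t e); rewrite /incident eqxx orbT; split => //.
        by rewrite -hs eq_sym noloop.
      by move: be de; rewrite hs; case: (d e v); case: (d e (t e)).
    - exists (s e); rewrite /incident eqxx; split => //.
        by rewrite -hs noloop.
      by move: be de; rewrite hs; case: (d e v); case: (d e (s e)).
  have [e' [ie' de']] := hr u.
  have iv' : incident s t e' v.
    apply/negPn/negP => /hm mo.
    have [a b] := mb e' mo.
    by case/orP: ie' => /eqP h; move: de'; rewrite -h ?a ?b.
  exists e, e'; split => //.
  rewrite /parallel (@ends2 V E s t noloop e e' u v nuv iu ie ie' iv') andbT.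
  by apply/eqP => E'; move: du; rewrite E' de'.
- move=> [mc [v [uv [[e1 [e2 [par ie1]]] hS]]]].
  pose d e w := if incident s t e v then (if w == v then e == e1 else e != e1) else false.
  have bich : forall e, incident s t e v -> bichromatic s t d e.
    move=> e ie; rewrite /bichromatic /d ie.
    case/orP: ie => /eqP hs.
    - have : t e == v = false by apply/negbTE; rewrite -hs eq_sym noloop.
      by move=> ->; rewrite hs eqxx; case: (e == e1).
    - have : s e == v = false by apply/negbTE; rewrite -hs noloop.
      by move=> ->; rewrite hs eqxx; case: (e == e1).
  have nbich : forall e, ~~ incident s t e v -> forall w, d e w = false.
    by move=> e ie w; rewrite /d (negbTE ie).
  exists d; split.
    move=> e; rewrite /monochromatic.
    case: (boolP (incident s t e v)) => ie.
      by move/eqP: (bich e ie) => h /eqP.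
    by rewrite !nbich.
  split; last by move=> e /hS /bich.
  split => //; exists v; split => //; split.
    move=> e; split; first exact: bich.
    by apply: contraTT => ie; rewrite /bichromatic !nbich.
  split.
    move=> e; split.
      by move=> ie; rewrite /monochromatic !nbich.
    by move=> mo; apply/negP => ie; move: (bich e ie); rewrite /bichromatic (eqP mo) eqxx.
  move=> u; case: (eqVneq u v) => [->|nuv].
    by exists e1; split => //; rewrite /d ie1 !eqxx.
  have /existsP [e he] := uv u nuv.
  have [ieu iev] : incident s t e u /\ incident s t e v.
    by rewrite /incident; case/orP: he => /andP[/eqP -> /eqP ->]; rewrite !eqxx ?orbT.
  case: (eqVneq e e1) => [Ee|ne].
    subst e.
    exists e2; split; first exact: (@par_inc V E s t e1 e2 u par ieu).
    rewrite /d (@par_inc V E s t e1 e2 v par ie1) (negbTE nuv).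
    by move: par; rewrite /parallel => /andP[? _]; rewrite eq_sym.
  by exists e; split => //; rewrite /d iev (negbTE nuv).
Qed.
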